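(* Let $r$ be an $\mathfrak s$-matrix on a pre-Lie algebra $(\mathfrak g,\cdot_{\mathfrak g})$. Then $(\mathfrak g^*,\ast_r)$ is a pre-Lie algebra, where $\alpha\ast_r\beta=L^*_{r^\sharp(\alpha)}\beta$ for $\alpha,\beta\in\mathfrak g^*$.
   Context: A pre-Lie algebra is a finite-dimensional vector space $\mathfrak g$ over a field of characteristic $0$ with product $\cdot$ satisfying $(x\cdot y)\cdot z-x\cdot(y\cdot z)=(y\cdot x)\cdot z-y\cdot(x\cdot z)$; $[x,y]_{\mathfrak g}=x\cdot y-y\cdot x$. Define $\langle L^*_x\alpha,y\rangle=-\langle\alpha,x\cdot y\rangle$. For $r\in\mathrm{Sym}^2(\mathfrak g)$, $r^\sharp:\mathfrak g^*\to\mathfrak g$ is $\langle r^\sharp(\alpha),\beta\rangle=r(\alpha,\beta)$. For $r=\sum_ia_i\otimes b_i$, $[r,r]=-\sum_{i,j}a_i\cdot a_j\otimes b_i\otimes b_j+\sum_{i,j}a_i\otimes b_i\cdot a_j\otimes b_j+\sum_{i,j}a_i\otimes a_j\otimes[b_i,b_j]_{\mathfrak g}$; $r$ is an $\mathfrak s$-matrix if $r\in\mathrm{Sym}^2(\mathfrak g)$ and $[r,r]=0$. *)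

(* Defs.v *)
From HB Require Import structures.
From mathcomp Require Import all_boot all_order all_algebra.
Set Implicit Arguments. Unset Strict Implicit. Unset Printing Implicit Defensive.
Import GRing.Theory.
Local Open Scope ring_scope.

Definition preLie (K : fieldType) (V : lmodType K) (m : V -> V -> V) : Prop :=
  [/\ (forall x, linear (m x)),
      (forall y, linear (fun x => m x y)) &
      (forall x y z, m (m x y) z - m x (m y z) = m (m y x) z - m y (m x z))].

Notation dual V K := ('Hom(V, K^o)).

(* Elements of g (x) g are written r = sum_i a_i (x) b_i, as a finite list of
   pairs (a_i, b_i); elements of g (x) g (x) g as lists of triples.
   In finite dimension, a tensor is determined by its pairings with
   alpha (x) beta (resp. alpha (x) beta (x) gamma), alpha, beta, gamma in g^*. *)
Definition pair2 (K : fieldType) (V : vectType K) (r : seq (V * V))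
  (alpha beta : dual V K) : K :=
  \sum_(p <- r) (alpha p.1 : K) * (beta p.2 : K).

Definition pair3 (K : fieldType) (V : vectType K) (t : seq (V * V * V))
  (alpha beta gamma : dual V K) : K :=
  \sum_(p <- t) (alpha p.1.1 : K) * (beta p.1.2 : K) * (gamma p.2 : K).

Definition is_sym2 (K : fieldType) (V : vectType K) (r : seq (V * V)) : Prop :=
  forall alpha beta : dual V K,
    pair2 r alpha beta = pair2 [seq (p.2, p.1) | p <- r] alpha beta.

Definition bracket (K : fieldType) (V : vectType K) (m : V -> V -> V) x y :=
  m x y - m y x.

Definition rr (K : fieldType) (V : vectType K) (m : V -> V -> V)
  (r : seq (V * V)) : seq (V * V * V) :=
  [seq (- m p.1 q.1, p.2, q.2) | p <- r, q <- r]
  ++ [seq (p.1, m p.2 q.1, q.2) | p <- r, q <- r]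
  ++ [seq (p.1, q.1, bracket m p.2 q.2) | p <- r, q <- r].

Definition s_matrix (K : fieldType) (V : vectType K) (m : V -> V -> V)
  (r : seq (V * V)) : Prop :=
  is_sym2 r /\ forall alpha beta gamma : dual V K, pair3 (rr m r) alpha beta gamma = 0.

(* r^sharp : g^* -> g, <r^sharp(alpha), beta> = r(alpha, beta). *)
Definition rsharp (K : fieldType) (V : vectType K) (r : seq (V * V))
  (alpha : dual V K) : V :=
  \sum_(p <- r) (alpha p.1 : K) *: p.2.

Definition Lstar (K : fieldType) (V : vectType K) (m : V -> V -> V) (x : V)
  (alpha : dual V K) : dual V K :=
  linfun (fun y : V => (- (alpha (m x y) : K)) : K^o).

Definition ast_r (K : fieldType) (V : vectType K) (m : V -> V -> V)
  (r : seq (V * V)) (alpha beta : dual V K) : dual V K :=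
  Lstar m (rsharp r alpha) beta.

(* Main.v *)
Require Import Defs.
From mathcomp Require Import all_boot all_order all_algebra.
From HB Require Import structures.
From mathcomp Require Import ring.
Import GRing.Theory.
Local Open Scope ring_scope.

Section Lin.
Variables (K : fieldType) (U W : lmodType K) (f : U -> W) (H : linear f).
Lemma linZ a x : f (a *: x) = a *: f x.
Proof. exact: (GRing.semilinear_linear H).1. Qed.
Lemma linD x y : f (x + y) = f x + f y.
Proof. exact: (GRing.semilinear_linear H).2. Qed.
Lemma lin0 : f 0 = 0.
Proof. by rewrite -(scale0r 0) linZ scale0r. Qed.
Lemma linN x : f (- x) = - f x.
Proof. by rewrite -scaleN1r linZ scaleN1r. Qed.
Lemma linB x y : f (x - y) = f x - f y.
Proof. by rewrite linD linN. Qed.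
Lemma linS I (s : seq I) (F : I -> U) : f (\sum_(i <- s) F i) = \sum_(i <- s) f (F i).
Proof. exact: (big_morph f linD lin0). Qed.
End Lin.
Arguments linZ {K U W f} H. Arguments linD {K U W f} H. Arguments lin0 {K U W f} H. Arguments linN {K U W f} H. Arguments linB {K U W f} H. Arguments linS {K U W f} H {I}.

Lemma lfunE_P (K : fieldType) (U W : vectType K) (f : U -> W) (H : linear f) :
  linfun f =1 f.
Proof.
pose F : {linear U -> W} := HB.pack f (GRing.isLinear.Build K U W *:%R f H).
exact: (lfunE F).
Qed.

Arguments lfunE_P {K U W f} H.
Lemma aux (T : zmodType) (X Y Z : T) : Y + (- X + Z) = 0 -> X - Y = Z.
Proof. move=> H. have H1 : - X + Z = - Y by apply/eqP; rewrite -addr_eq0 addrC H. by rewrite -(addKr (- X) Z) opprK H1. Qed.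
Lemma aux2 (T : comRingType) (P Q U W X Y : T) :
  P - Q = U - W -> U - X = W - Y -> - P - Y = - Q - X.
Proof.
move=> h1 h2; apply/eqP; rewrite -subr_eq0; apply/eqP.
transitivity (- (P - Q - (U - W)) - ((U - X) - (W - Y))); first ring.
by rewrite h1 h2 !subrr oppr0 addr0.
Qed.
Section Main.
Variables (K : fieldType) (V : vectType K) (m : V -> V -> V) (r : seq (V * V)).
Hypothesis Hl : forall x, linear (m x).
Hypothesis Hr : forall y, linear (fun x => m x y).
Notation D := (dual V K).

Lemma LstarE x (a : D) y : Lstar m x a y = - a (m x y).
Proof.
rewrite /Lstar lfunE_P // => c u v.
rewrite (linD (Hl x)) (linZ (Hl x)) linearD linearZ opprD.
by rewrite /= scalerN.
Qed.

Lemma rsharpE (a g : D) : (g (rsharp r a) : K) = \sum_(p <- r) (a p.1 : K) * (g p.2 : K).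
Proof.
rewrite /rsharp linear_sum; apply: eq_bigr => p _; rewrite linearZ.
by [].
Qed.

Lemma rsharp_lin : linear (rsharp r).
Proof.
move=> c a b; rewrite /rsharp scaler_sumr -big_split; apply: eq_bigr => p _.
by rewrite add_lfunE scale_lfunE scalerDl scalerA.
Qed.

Lemma mrsE (a b : D) y : (b (m (rsharp r a) y) : K) = \sum_(q <- r) (a q.1 : K) * (b (m q.2 y) : K).
Proof.
rewrite /rsharp (linS (Hr y)) linear_sum; apply: eq_bigr => q _.
by rewrite (linZ (Hr y)) linearZ.
Qed.

Lemma mrsE' (a b : D) x : (b (m x (rsharp r a)) : K) = \sum_(q <- r) (a q.1 : K) * (b (m x q.2) : K).
Proof.
rewrite /rsharp (linS (Hl x)) linear_sum; apply: eq_bigr => q _.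
by rewrite (linZ (Hl x)) linearZ.
Qed.

Lemma linr (a : D) y : linear (fun v => (a (m v y) : K^o)).
Proof. by move=> c u v; rewrite (linD (Hr y)) (linZ (Hr y)) linearD linearZ. Qed.

Hypothesis Hsym : is_sym2 r.
Hypothesis Hrr : forall a b c : D, pair3 (rr m r) a b c = 0.

Lemma hom (a b g : D) :
  (g (rsharp r (ast_r m r a b)) : K) - (g (rsharp r (ast_r m r b a)) : K)
  = g (bracket m (rsharp r a) (rsharp r b)).
Proof.
have E1 : forall a b : D, (g (rsharp r (ast_r m r a b)) : K) =
   - \sum_(p <- r) \sum_(q <- r) (a q.1 : K) * (b (m q.2 p.1) : K) * (g p.2 : K).
  move=> a' b'; rewrite rsharpE -sumrN; apply: eq_bigr => p _.
  by rewrite /ast_r LstarE mrsE mulNr mulr_suml -sumrN.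
have E3 : (g (bracket m (rsharp r a) (rsharp r b)) : K) =
   \sum_(p <- r) \sum_(q <- r) (a p.1 : K) * (b q.1 : K) * (g (m p.2 q.2) : K)
   - \sum_(p <- r) \sum_(q <- r) (b p.1 : K) * (a q.1 : K) * (g (m p.2 q.2) : K).
  rewrite /bracket linearB /= mrsE mrsE; congr (_ - _); apply: eq_bigr => p _;
  by rewrite mrsE' mulr_sumr; apply: eq_bigr => q _; rewrite mulrA.
have := Hrr a b g.
have T1 : \sum_(i1 <- r) \sum_(i2 <- r) (a (- m i1.1 i2.1) : K) * (b i1.2 : K) * (g i2.2 : K)
    = g (rsharp r (ast_r m r b a)).
  rewrite E1 exchange_big -sumrN; apply: eq_bigr => q _.
  have e := lfunE_P (linr a q.1).
  have H : \sum_(p <- r) (a (m p.1 q.1) : K) * (b p.2 : K) = \sum_(p <- r) (b p.1 : K) * (a (m p.2 q.1) : K).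
    transitivity (pair2 r (linfun (fun v => (a (m v q.1) : K^o))) b).
      by rewrite /pair2; apply: eq_bigr => p _; rewrite e.
    rewrite Hsym /pair2 big_map; apply: eq_bigr => p _; rewrite e /=.
    by rewrite mulrC.
  transitivity (- ((\sum_(p <- r) (a (m p.1 q.1) : K) * (b p.2 : K)) * (g q.2 : K))).
    rewrite mulr_suml -sumrN; apply: eq_bigr => p _.
    by rewrite linearN !mulNr.
  by rewrite H mulr_suml.
have T2 : \sum_(i1 <- r) \sum_(i2 <- r) (a i1.1 : K) * (b (m i1.2 i2.1) : K) * (g i2.2 : K)
    = - g (rsharp r (ast_r m r a b)).
  by rewrite E1 opprK exchange_big.
have T3 : \sum_(i1 <- r) \sum_(i2 <- r) (a i1.1 : K) * (b i2.1 : K) * (g (bracket m i1.2 i2.2) : K)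
    = g (bracket m (rsharp r a) (rsharp r b)).
  rewrite E3.
  transitivity (\sum_(p <- r) \sum_(q <- r) (a p.1 : K) * (b q.1 : K) * (g (m p.2 q.2) : K)
   - \sum_(p <- r) \sum_(q <- r) (a p.1 : K) * (b q.1 : K) * (g (m q.2 p.2) : K)).
    rewrite -sumrB; apply: eq_bigr => p _; rewrite -sumrB; apply: eq_bigr => q _.
    by rewrite /bracket linearB /= mulrBr.
  congr (_ - _); rewrite exchange_big; apply: eq_bigr => p _; apply: eq_bigr => q _.
  by rewrite (mulrC (a _)).
rewrite /pair3 /rr !big_cat /= !big_allpairs_dep /= T1 T2 T3 => H0.
exact: (@aux K _ _ _ H0).
Qed.

Lemma astE (a b : D) y : ast_r m r a b y = - b (m (rsharp r a) y).
Proof. exact: LstarE. Qed.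

Lemma main_preLie (Hpl : preLie m) : preLie (ast_r m r).
Proof.
case: Hpl => _ _ Hid.
split.
- move=> a c b b'; apply/lfunP => y.
  rewrite add_lfunE scale_lfunE !astE add_lfunE scale_lfunE /=.
  by rewrite opprD scalerN.
- move=> b c a a'; apply/lfunP => y.
  rewrite add_lfunE scale_lfunE !astE rsharp_lin (linD (Hr y)) (linZ (Hr y)) /=.
  by rewrite linearD linearZ /= opprD scalerN.
- move=> a b c; apply/lfunP => y.
  rewrite !add_lfunE !opp_lfunE !astE.
  have e := lfunE_P (linr c y).
  have h1 := hom a b (linfun (fun v => (c (m v y) : K^o))).
  rewrite !e /bracket (linB (Hr y)) linearB /= in h1.
  have h2 := congr1 (fun v => (c v : K)) (Hid (rsharp r a) (rsharp r b) y).
  rewrite /= !linearB /= in h2.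
  rewrite !opprK.
  exact: (@aux2 K _ _ _ _ _ _ h1 h2).
Qed.
End Main.

Theorem proposition4p2 (K : fieldType) (V : vectType K) (m : V -> V -> V)
  (r : seq (V * V)) :
  [pchar K] =i pred0 ->
  preLie m ->
  s_matrix m r ->
  preLie (ast_r m r).
Proof.
move=> _ Hpl [Hsym Hrr]; have Hpl' := Hpl; case: Hpl' => Hl Hr _.
exact: main_preLie.
Qed.
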